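(* Assume the hypotheses: $U_e=U_f=U\ge0$, $\beta<-2$, $\kappa_g\ge16$, $\alpha\le2\min\{\beta,-3\}-1$, deterministic source $g$, and a realization of the static velocity with $|V_k|,|W_k|\le\Xi$. Let $\varpi$ be as defined below and suppose $\varepsilon:=4U\Xi\varpi<1$. Then the iterates $\theta^{(0)}=-\Delta^{-1}g$, $\theta^{(n+1)}=\Delta^{-1}(u\cdot\nabla\theta^{(n)}-g)$ converge mode-wise to a limit $\theta^{(\infty)}$, and there is a constant $c_1$ depending only on $(\gamma_k)$, $c_g$, $\kappa_g$, $\alpha$, $\beta$ (times $U\Xi$) such that for all $k\neq0$ $$|\theta^{(1)}_k-\theta^{(\infty)}_k|\le c_1\,\varepsilon\,|k|^{-2}K_\beta(|k|).$$
   Context: Setting: $D=[0,2\pi]^3$ periodic; mean-zero functions $f=\sum_{k\in\mathbb Z^3\setminus\{0\}}f_ke^{ik\cdot x}$; $(\Delta^{-1}f)_k=-|k|^{-2}f_k$. Craya–Herring basis: for $k=(k_x,k_y,k_z)$ with $|k_h|:=\sqrt{k_x^2+k_y^2}>0$, $e_k=(k_y,-k_x,0)/|k_h|$, $f_k=(k_xk_z,k_yk_z,-|k_h|^2)/(|k||k_h|)$; for $k\ne0$ on the $z$-axis, a fixed orthonormal pair orthogonal to $k$. Source: $\Delta^{-1}g=\sum_{k\ne0}\gamma_ke^{ik\cdot x}$ with $\gamma_{-k}=\overline{\gamma_k}$, constants $c_g\ge0$, $\kappa_g>1$, $\alpha<0$, $|\gamma_k|\le c_g|k|^\alpha$ for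 $|k|\ge\kappa_g$. Velocity: $u(x)=\sum_{k\ne0}|k|^\beta U[e_kV_k+f_kW_k]e^{ik\cdot x}$ with complex $V_k,W_k$, $V_{-k}=\overline{V_k}$, $W_{-k}=\overline{W_k}$, $|V_k|,|W_k|\le\Xi$. $K_\beta(s):=\min\{1,(s/(2\kappa_g))^\beta\}$; $\varpi:=\sup_{k\neq0}K_\beta(|k|)^{-1}\sum_{j\notin\{0,k\}}|k-j|^\beta|j|^{-1}K_\beta(|j|)$ (finite since $\beta<-2$). *)

(* Defs.v *)
From Stdlib Require Import Reals List ZArith.
From Coquelicot Require Import Coquelicot.
Open Scope R_scope.

Definition Z3 : Type := (Z * Z * Z)%type.
Definition kx (k : Z3) : R := let '(a, _, _) := k in IZR a.
Definition ky (k : Z3) : R := let '(_, b, _) := k in IZR b.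
Definition kz (k : Z3) : R := let '(_, _, c) := k in IZR c.
Definition Z3zero : Z3 := (0%Z, 0%Z, 0%Z).
Definition Z3sub (k j : Z3) : Z3 :=
  let '(a, b, c) := k in let '(a', b', c') := j in ((a - a')%Z, (b - b')%Z, (c - c')%Z).
Definition Z3opp (k : Z3) : Z3 := let '(a, b, c) := k in ((- a)%Z, (- b)%Z, (- c)%Z).
Definition Z3eqb (k j : Z3) : bool :=
  let '(a, b, c) := k in let '(a', b', c') := j in
  (Z.eqb a a' && Z.eqb b b' && Z.eqb c c')%bool.
Definition on_zaxis (k : Z3) : bool := let '(a, b, _) := k in (Z.eqb a 0 && Z.eqb b 0)%bool.

Definition knorm (k : Z3) : R := sqrt (kx k ^ 2 + ky k ^ 2 + kz k ^ 2).
Definition khnorm (k : Z3) : R := sqrt (kx k ^ 2 + ky k ^ 2).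

Definition R3 : Type := (R * R * R)%type.
Definition C3 : Type := (C * C * C)%type.
Definition dotR3 (v w : R3) : R :=
  let '(a, b, c) := v in let '(a', b', c') := w in a * a' + b * b' + c * c'.
Definition Z3toR3 (k : Z3) : R3 := (kx k, ky k, kz k).

(** Craya--Herring basis; e0, f0 give the fixed orthonormal pair used for
    modes on the z-axis. *)
Definition CH_e (e0 : Z3 -> R3) (k : Z3) : R3 :=
  if on_zaxis k then e0 k
  else (ky k / khnorm k, - kx k / khnorm k, 0).
Definition CH_f (f0 : Z3 -> R3) (k : Z3) : R3 :=
  if on_zaxis k then f0 k
  else (kx k * kz k / (knorm k * khnorm k),
        ky k * kz k / (knorm k * khnorm k),
        - (khnorm k ^ 2) / (knorm k * khnorm k)).

(** Fourier coefficient of the velocity: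
    u_k = |k|^beta U (e_k V_k + f_k W_k). *)
Definition vel (U beta : R) (e0 f0 : Z3 -> R3) (V W : Z3 -> C) (k : Z3) : C3 :=
  let s := RtoC (Rpower (knorm k) beta * U) in
  let '(e1, e2, e3) := CH_e e0 k in
  let '(f1, f2, f3) := CH_f f0 k in
  (s * (RtoC e1 * V k + RtoC f1 * W k),
   s * (RtoC e2 * V k + RtoC f2 * W k),
   s * (RtoC e3 * V k + RtoC f3 * W k))%C.

(** j . w  for j in Z^3 and a complex vector w (no conjugation). *)
Definition dotZC (j : Z3) (w : C3) : C :=
  let '(w1, w2, w3) := w in (RtoC (kx j) * w1 + RtoC (ky j) * w2 + RtoC (kz j) * w3)%C.

Definition Ci : C := (0, 1).

(** Summation over Z^3 via symmetric cube partial sums over [-N,N]^3. *)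
Definition Zrange (N : nat) : list Z :=
  map (fun i => (Z.of_nat i - Z.of_nat N)%Z) (seq 0 (2 * N + 1)).
Definition cube (N : nat) : list Z3 :=
  flat_map (fun a => flat_map (fun b => map (fun c => (a, b, c)) (Zrange N)) (Zrange N))
           (Zrange N).
Definition psumC (f : Z3 -> C) (N : nat) : C := fold_right (fun j acc => (f j + acc)%C) (RtoC 0) (cube N).
Definition psumR (f : Z3 -> R) (N : nat) : R := fold_right (fun j acc => f j + acc) 0 (cube N).
Definition Zseries_conv (f : Z3 -> C) : Prop :=
  ex_finite_lim_seq (fun N => Re (psumC f N)) /\ ex_finite_lim_seq (fun N => Im (psumC f N)).
Definition Zsum (f : Z3 -> C) : C :=
  (real (Lim_seq (fun N => Re (psumC f N))), real (Lim_seq (fun N => Im (psumC f N)))).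

(** Fourier coefficient of u . grad theta at mode k:
    (u.grad theta)_k = sum_{j notin {0,k}} (u_{k-j} . i j) theta_j. *)
Definition adv_term (u : Z3 -> C3) (theta : Z3 -> C) (k : Z3) (j : Z3) : C :=
  if (Z3eqb j Z3zero || Z3eqb j k)%bool then RtoC 0
  else (Ci * dotZC j (u (Z3sub k j)) * theta j)%C.
Definition adv (u : Z3 -> C3) (theta : Z3 -> C) (k : Z3) : C := Zsum (adv_term u theta k).

(** Iterates: theta^(0) = -Delta^{-1} g, theta^(n+1) = Delta^{-1}(u.grad theta^(n) - g),
    with (Delta^{-1} h)_k = -|k|^{-2} h_k and (Delta^{-1} g)_k = gamma_k. *)
Fixpoint iterate (u : Z3 -> C3) (gamma : Z3 -> C) (n : nat) : Z3 -> C :=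
  match n with
  | O => fun k => (- gamma k)%C
  | S m => fun k => (RtoC (- / (knorm k ^ 2)) * adv u (iterate u gamma m) k - gamma k)%C
  end.

Definition Kbeta (kappa beta s : R) : R := Rmin 1 (Rpower (s / (2 * kappa)) beta).

(** varpi = sup_{k<>0} K_beta(|k|)^{-1} sum_{j notin {0,k}} |k-j|^beta |j|^{-1} K_beta(|j|),
    written as the sup over k <> 0 and N of the (nonnegative) cube partial sums. *)
Definition varpi_term (kappa beta : R) (k j : Z3) : R :=
  if (Z3eqb j Z3zero || Z3eqb j k)%bool then 0
  else Rpower (knorm (Z3sub k j)) beta * / knorm j * Kbeta kappa beta (knorm j).
Definition varpi (kappa beta : R) : Rbar :=
  Lub_Rbar (fun x => exists (k : Z3) (N : nat), k <> Z3zero /\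
     x = / Kbeta kappa beta (knorm k) * psumR (varpi_term kappa beta k) N).

(* Main.v *)
Require Import Defs.
From Stdlib Require Import Reals List ZArith.
From Coquelicot Require Import Coquelicot.
From Stdlib Require Import Lra Lia FunctionalExtensionality.
Open Scope R_scope.

Definition sumL {A} (f : A -> R) (l : list A) : R := fold_right (fun x acc => f x + acc) 0 l.

Lemma sumL_app {A} (f : A -> R) l1 l2 : sumL f (l1 ++ l2) = sumL f l1 + sumL f l2.
Proof. induction l1; simpl; [ring|rewrite IHl1; ring]. Qed.
Lemma sumL_flat_map {A B} (f : B -> R) (G : A -> list B) l :
  sumL f (flat_map G l) = sumL (fun a => sumL f (G a)) l.
Proof. induction l; simpl; auto. rewrite sumL_app, IHl; auto. Qed.
Lemma sumL_map {A B} (f : B -> R) (m : A -> B) l : sumL f (map m l) = sumL (fun a => f (m a)) l.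
Proof. induction l; simpl; auto. rewrite IHl; auto. Qed.
Lemma sumL_ext_in {A} (f g : A -> R) l : (forall x, In x l -> f x = g x) -> sumL f l = sumL g l.
Proof. induction l; simpl; intros H; auto. rewrite H, IHl; auto. Qed.
Lemma sumL_ext {A} (f g : A -> R) l : (forall x, f x = g x) -> sumL f l = sumL g l.
Proof. intros; apply sumL_ext_in; auto. Qed.
Lemma sumL_plus {A} (f g : A -> R) l : sumL (fun x => f x + g x) l = sumL f l + sumL g l.
Proof. induction l; simpl; [ring|rewrite IHl; ring]. Qed.
Lemma sumL_scal {A} c (f : A -> R) l : sumL (fun x => c * f x) l = c * sumL f l.
Proof. induction l; simpl; [ring|rewrite IHl; ring]. Qed.
Lemma sumL_zero {A} (l : list A) : sumL (fun _ => 0) l = 0.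
Proof. induction l; simpl; [ring|rewrite IHl; ring]. Qed.
Lemma sumL_nonneg {A} (f : A -> R) l : (forall x, 0 <= f x) -> 0 <= sumL f l.
Proof. intros H; induction l; simpl; [lra|]. specialize (H a); lra. Qed.
Lemma sumL_le {A} (f g : A -> R) l : (forall x, f x <= g x) -> sumL f l <= sumL g l.
Proof. intros H; induction l; simpl; [lra|]. specialize (H a); lra. Qed.
Lemma sumL_abs {A} (f : A -> R) l : Rabs (sumL f l) <= sumL (fun x => Rabs (f x)) l.
Proof. induction l; simpl. rewrite Rabs_R0; lra.
  eapply Rle_trans; [apply Rabs_triang|]. lra. Qed.
Lemma sumL_if {A} (p : A -> bool) (b : bool) (f : A -> R) l :
  sumL (fun x => if b then f x else 0) l = if b then sumL f l else 0.
Proof. destruct b; auto. apply sumL_zero. Qed.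

Lemma psumR_eq (f : Z3 -> R) N : psumR f N =
  sumL (fun a => sumL (fun b => sumL (fun c => f (a, b, c)) (Zrange N)) (Zrange N)) (Zrange N).
Proof.
  unfold psumR, cube. fold (sumL f (flat_map (fun a => flat_map (fun b => map (fun c => (a, b, c)) (Zrange N)) (Zrange N)) (Zrange N))).
  rewrite sumL_flat_map. apply sumL_ext; intro a. rewrite sumL_flat_map. apply sumL_ext; intro b.
  rewrite sumL_map; auto.
Qed.


Lemma sumL_Zrange_S (h : Z -> R) M :
  sumL h (Zrange (S M)) = h (- Z.of_nat (S M))%Z + sumL h (Zrange M) + h (Z.of_nat (S M)).
Proof.
  unfold Zrange. replace (2 * S M + 1)%nat with (S (S (2 * M + 1))) by lia.
  rewrite seq_S, map_app, sumL_app.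
  change (seq 0 (S (2 * M + 1))) with (0%nat :: seq 1 (2 * M + 1)).
  rewrite <- seq_shift. cbn [map]. rewrite map_map. unfold sumL at 1 2. cbn [fold_right]. change (fold_right (fun (x : Z) (acc : R) => h x + acc) 0) with (sumL h).
  replace (Z.of_nat 0 - Z.of_nat (S M))%Z with (- Z.of_nat (S M))%Z by lia.
  replace (Z.of_nat (0 + S (2 * M + 1)) - Z.of_nat (S M))%Z with (Z.of_nat (S M)) by lia.
  assert (E: sumL h (map (fun x => (Z.of_nat (S x) - Z.of_nat (S M))%Z) (seq 0 (2 * M + 1))) =
    sumL h (map (fun i => (Z.of_nat i - Z.of_nat M)%Z) (seq 0 (2 * M + 1)))).
  { f_equal. apply map_ext. intros; lia. }
  rewrite E. ring.
Qed.

Lemma in_Zrange a N : In a (Zrange N) <-> (Z.abs a <= Z.of_nat N)%Z.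
Proof.
  unfold Zrange. rewrite in_map_iff. split.
  - intros [i [<- Hi]]. apply in_seq in Hi. lia.
  - intros H. exists (Z.to_nat (a + Z.of_nat N)). split. lia. apply in_seq. lia.
Qed.

Lemma sumL_Zrange_mask (h : Z -> R) N M : (N <= M)%nat ->
  sumL (fun a => if (Z.abs a <=? Z.of_nat N)%Z then h a else 0) (Zrange M) = sumL h (Zrange N).
Proof.
  intros HNM. induction M.
  - assert (N = 0%nat) by lia. subst. apply sumL_ext_in. intros x Hx.
    apply in_Zrange in Hx. destruct (Z.leb_spec (Z.abs x) (Z.of_nat 0)); auto; lia.
  - destruct (Nat.eq_dec N (S M)).
    + subst. apply sumL_ext_in. intros x Hx.
      apply in_Zrange in Hx. destruct (Z.leb_spec (Z.abs x) (Z.of_nat (S M))); auto; lia.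
    + rewrite sumL_Zrange_S, IHM by lia.
      destruct (Z.leb_spec (Z.abs (- Z.of_nat (S M))) (Z.of_nat N)); [lia|].
      destruct (Z.leb_spec (Z.abs (Z.of_nat (S M))) (Z.of_nat N)); [lia|]. ring.
Qed.

Definition inC (N : nat) (j : Z3) : bool :=
  let '(a, b, c) := j in
  ((Z.abs a <=? Z.of_nat N)%Z && (Z.abs b <=? Z.of_nat N)%Z && (Z.abs c <=? Z.of_nat N)%Z)%bool.

Lemma psumR_sumL f N : psumR f N = sumL f (cube N).
Proof. reflexivity. Qed.

Lemma psumR_mask f N M : (N <= M)%nat ->
  psumR (fun j => if inC N j then f j else 0) M = psumR f N.
Proof.
  intros H. rewrite !psumR_eq. simpl inC.
  rewrite <- (sumL_Zrange_mask _ N M H). apply sumL_ext; intro a.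
  destruct (Z.abs a <=? Z.of_nat N)%Z; simpl.
  - rewrite <- (sumL_Zrange_mask _ N M H). apply sumL_ext; intro b.
    destruct (Z.abs b <=? Z.of_nat N)%Z; simpl.
    + rewrite <- (sumL_Zrange_mask _ N M H). auto.
    + apply sumL_zero.
  - transitivity (sumL (fun _ : Z => 0) (Zrange M)); [|apply sumL_zero].
    apply sumL_ext; intro b. apply sumL_zero.
Qed.

Lemma psumR_split f N M : (N <= M)%nat ->
  psumR f M = psumR f N + psumR (fun j => if inC N j then 0 else f j) M.
Proof.
  intros H. rewrite <- (psumR_mask f N M H), !psumR_sumL, <- sumL_plus.
  apply sumL_ext; intro j. destruct (inC N j); ring.
Qed.

Lemma psumR_diff (h g : Z3 -> R) N M : (forall j, Rabs (h j) <= g j) -> (N <= M)%nat ->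
  Rabs (psumR h M - psumR h N) <= psumR g M - psumR g N.
Proof.
  intros Hg H. rewrite (psumR_split h N M H), (psumR_split g N M H).
  replace (psumR h N + psumR (fun j => if inC N j then 0 else h j) M - psumR h N)
    with (psumR (fun j => if inC N j then 0 else h j) M) by ring.
  replace (psumR g N + psumR (fun j => if inC N j then 0 else g j) M - psumR g N)
    with (psumR (fun j => if inC N j then 0 else g j) M) by ring.
  rewrite !psumR_sumL. eapply Rle_trans; [apply sumL_abs|]. apply sumL_le; intro j.
  destruct (inC N j); [rewrite Rabs_R0; lra| apply Hg].
Qed.

Lemma psum_conv (h g : Z3 -> R) S : (forall j, Rabs (h j) <= g j) -> (forall N, psumR g N <= S) ->
  ex_finite_lim_seq (psumR h).
Proof.
  intros Hg HS.
  assert (Hmono : forall N M, (N <= M)%nat -> psumR g N <= psumR g M).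
  { intros N M H. pose proof (psumR_diff h g N M Hg H). pose proof (Rabs_pos (psumR h M - psumR h N)). lra. }
  assert (Hc : Cauchy_crit (psumR g)).
  { apply CV_Cauchy. apply growing_cv. intro n. apply Hmono. lia. exists S. intros x [n ->]. apply HS. }
  apply ex_lim_seq_cauchy_corr. intros eps. destruct (Hc eps (cond_pos eps)) as [N HN].
  exists N. intros n m Hn Hm. specialize (HN n m Hn Hm). unfold R_dist in HN.
  destruct (Nat.le_ge_cases n m) as [Hnm|Hnm].
  - pose proof (psumR_diff h g n m Hg Hnm). rewrite Rabs_minus_sym.
    pose proof (Hmono n m Hnm). rewrite Rabs_minus_sym, Rabs_right in HN by lra. lra.
  - pose proof (psumR_diff h g m n Hg Hnm).
    pose proof (Hmono m n Hnm). rewrite Rabs_right in HN by lra. lra.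
Qed.

Lemma Ceq (x y : C) : fst x = fst y -> snd x = snd y -> x = y.
Proof. destruct x, y; simpl; intros; subst; auto. Qed.
Lemma im_le_Cmod (c : C) : Rabs (Im c) <= Cmod c.
Proof. destruct c as [a b]; unfold Cmod; simpl. rewrite <- sqrt_Rsqr_abs.
  apply sqrt_le_1_alt. unfold Rsqr. nra. Qed.
Lemma efl_ext (u v : nat -> R) : (forall n, v n = u n) -> ex_finite_lim_seq v -> ex_finite_lim_seq u.
Proof. intros H [l Hl]. exists l. eapply is_lim_seq_ext; eauto. Qed.

Definition sumLC {A} (f : A -> C) (l : list A) : C := fold_right (fun x acc => (f x + acc)%C) (RtoC 0) l.
Lemma psumC_sumLC f N : psumC f N = sumLC f (cube N).
Proof. reflexivity. Qed.
Lemma Re_sumLC {A} (f : A -> C) l : Re (sumLC f l) = sumL (fun j => Re (f j)) l.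
Proof. induction l; simpl; auto. rewrite <- IHl. reflexivity. Qed.
Lemma Im_sumLC {A} (f : A -> C) l : Im (sumLC f l) = sumL (fun j => Im (f j)) l.
Proof. induction l; simpl; auto. rewrite <- IHl. reflexivity. Qed.
Lemma Cmod_sumLC {A} (f : A -> C) l : Cmod (sumLC f l) <= sumL (fun j => Cmod (f j)) l.
Proof. induction l; simpl. rewrite Cmod_0; lra.
  eapply Rle_trans; [apply Cmod_triangle|]. lra. Qed.
Lemma sumLC_minus {A} (f g : A -> C) l : sumLC (fun j => f j - g j)%C l = (sumLC f l - sumLC g l)%C.
Proof. induction l; simpl. apply Ceq; simpl; ring. rewrite IHl. ring. Qed.

Lemma lim_Cmod (a b : nat -> R) (x y T : R) : is_lim_seq a x -> is_lim_seq b y ->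
  (forall n, Cmod (a n, b n) <= T) -> Cmod (x, y) <= T.
Proof.
  intros Ha Hb H.
  assert (HT : 0 <= T) by (eapply Rle_trans; [apply Cmod_ge_0|apply (H 0%nat)]).
  assert (Hs : forall n, a n * a n + b n * b n <= T * T).
  { intro n. specialize (H n). unfold Cmod in H; simpl in H.
    assert (0 <= a n ^ 2 + b n ^ 2) by nra.
    apply Rsqr_incr_1 in H; [|apply sqrt_pos|lra]. rewrite Rsqr_sqrt in H by lra. unfold Rsqr in H. nra. }
  pose proof (is_lim_seq_plus' _ _ _ _ (is_lim_seq_mult' _ _ _ _ Ha Ha) (is_lim_seq_mult' _ _ _ _ Hb Hb)) as Hl.
  pose proof (is_lim_seq_le _ _ _ _ Hs Hl (is_lim_seq_const (T * T))) as Hle. simpl in Hle.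
  unfold Cmod; simpl. rewrite <- (sqrt_square T) by lra. apply sqrt_le_1_alt. nra.
Qed.

Lemma Zconv_dom (f : Z3 -> C) (g : Z3 -> R) S : (forall j, Cmod (f j) <= g j) -> (forall N, psumR g N <= S) ->
  Zseries_conv f /\ Cmod (Zsum f) <= S.
Proof.
  intros Hf HS.
  assert (Hr : forall N, Re (psumC f N) = psumR (fun j => Re (f j)) N) by (intro; apply Re_sumLC).
  assert (Hi : forall N, Im (psumC f N) = psumR (fun j => Im (f j)) N) by (intro; apply Im_sumLC).
  assert (C1 : ex_finite_lim_seq (fun N => Re (psumC f N))).
  { eapply efl_ext. intro N; symmetry; apply Hr.
    apply (psum_conv _ g S); auto. intro j. eapply Rle_trans; [apply re_le_Cmod|apply Hf]. }
  assert (C2 : ex_finite_lim_seq (fun N => Im (psumC f N))).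
  { eapply efl_ext. intro N; symmetry; apply Hi.
    apply (psum_conv _ g S); auto. intro j. eapply Rle_trans; [apply im_le_Cmod|apply Hf]. }
  split. split; auto.
  unfold Zsum. apply (lim_Cmod _ _ _ _ _ (Lim_seq_correct' _ C1) (Lim_seq_correct' _ C2)).
  intro n. replace (Re (psumC f n), Im (psumC f n)) with (psumC f n) by (destruct (psumC f n); reflexivity).
  rewrite psumC_sumLC. eapply Rle_trans; [apply Cmod_sumLC|]. rewrite <- psumR_sumL.
  eapply Rle_trans; [|apply (HS n)]. rewrite !psumR_sumL. apply sumL_le; auto.
Qed.

Lemma Zsum_minus (f g : Z3 -> C) : Zseries_conv f -> Zseries_conv g ->
  Zsum (fun j => f j - g j)%C = (Zsum f - Zsum g)%C.
Proof.
  intros [F1 F2] [G1 G2]. unfold Zsum.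
  rewrite (Lim_seq_ext (fun N => Re (psumC (fun j => f j - g j)%C N)) (fun N => Re (psumC f N) - Re (psumC g N))).
  2:{ intro n. rewrite !psumC_sumLC, sumLC_minus. reflexivity. }
  rewrite (Lim_seq_ext (fun N => Im (psumC (fun j => f j - g j)%C N)) (fun N => Im (psumC f N) - Im (psumC g N))).
  2:{ intro n. rewrite !psumC_sumLC, sumLC_minus. reflexivity. }
  rewrite (is_lim_seq_unique _ _ (is_lim_seq_minus' _ _ _ _ (Lim_seq_correct' _ F1) (Lim_seq_correct' _ G1))).
  rewrite (is_lim_seq_unique _ _ (is_lim_seq_minus' _ _ _ _ (Lim_seq_correct' _ F2) (Lim_seq_correct' _ G2))).
  apply Ceq; simpl; ring.
Qed.

Lemma Z3eqb_spec j k : Z3eqb j k = true <-> j = k.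
Proof.
  destruct j as [[a b] c], k as [[a' b'] c']; simpl.
  rewrite !Bool.andb_true_iff, !Z.eqb_eq. split.
  - intros [[-> ->] ->]; auto.
  - intros H; inversion H; auto.
Qed.

Lemma knorm_sq k : knorm k ^ 2 = dotR3 (Z3toR3 k) (Z3toR3 k).
Proof. unfold knorm. rewrite pow2_sqrt. destruct k as [[a b] c]; simpl; ring.
  apply Rplus_le_le_0_compat; [apply Rplus_le_le_0_compat|]; apply pow2_ge_0. Qed.

Lemma knorm_ge1 k : k <> Z3zero -> 1 <= knorm k.
Proof.
  intros H. destruct k as [[a b] c]. unfold knorm, kx, ky, kz.
  rewrite <- sqrt_1. apply sqrt_le_1_alt.
  assert (a <> 0 \/ b <> 0 \/ c <> 0)%Z as Hn.
  { destruct (Z.eq_dec a 0), (Z.eq_dec b 0), (Z.eq_dec c 0); subst; auto. }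
  assert (forall z : Z, z <> 0%Z -> 1 <= IZR z ^ 2).
  { intros z Hz. replace (IZR z ^ 2) with (IZR (z*z)) by (rewrite mult_IZR; ring). apply IZR_le. nia. }
  assert (forall z : Z, 0 <= IZR z ^ 2) by (intro; apply pow2_ge_0).
  destruct Hn as [Hn|[Hn|Hn]]; pose proof (H0 _ Hn);
  pose proof (H1 a); pose proof (H1 b); pose proof (H1 c); lra.
Qed.

Lemma knorm_pos k : k <> Z3zero -> 0 < knorm k.
Proof. intros H; pose proof (knorm_ge1 k H); lra. Qed.

Lemma Z3sub_nz k j : Z3eqb j k = false -> Z3sub k j <> Z3zero.
Proof.
  intros H E. destruct j as [[a b] c], k as [[a' b'] c']; simpl in *.
  inversion E. assert (a = a')%Z by lia. assert (b = b')%Z by lia. assert (c = c')%Z by lia.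
  subst. rewrite !Z.eqb_refl in H. discriminate.
Qed.

Lemma CS3 (a b : R3) : (dotR3 a b) ^ 2 <= dotR3 a a * dotR3 b b.
Proof.
  destruct a as [[a1 a2] a3], b as [[b1 b2] b3]; simpl.
  assert (E: (a1 * a1 + a2 * a2 + a3 * a3) * (b1 * b1 + b2 * b2 + b3 * b3) - (a1 * b1 + a2 * b2 + a3 * b3) ^ 2
    = (a1*b2 - a2*b1)^2 + (a1*b3-a3*b1)^2 + (a2*b3-a3*b2)^2) by ring.
  assert (0 <= (a1*b2 - a2*b1)^2) by apply pow2_ge_0.
  assert (0 <= (a1*b3 - a3*b1)^2) by apply pow2_ge_0.
  assert (0 <= (a2*b3 - a3*b2)^2) by apply pow2_ge_0. lra.
Qed.

Lemma dot_unit_le (j : Z3) (e : R3) : dotR3 e e = 1 -> Rabs (dotR3 (Z3toR3 j) e) <= knorm j.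
Proof.
  intros He. pose proof (CS3 (Z3toR3 j) e) as H. rewrite He, Rmult_1_r, <- knorm_sq in H.
  rewrite <- (sqrt_pow2 (knorm j)) by (unfold knorm; apply sqrt_pos).
  rewrite <- sqrt_Rsqr_abs. apply sqrt_le_1_alt. unfold Rsqr. nra.
Qed.

Definition axis_hyp (e0 f0 : Z3 -> R3) := forall k, k <> Z3zero -> on_zaxis k = true ->
       dotR3 (e0 k) (e0 k) = 1 /\ dotR3 (f0 k) (f0 k) = 1 /\ dotR3 (e0 k) (f0 k) = 0 /\
       dotR3 (e0 k) (Z3toR3 k) = 0 /\ dotR3 (f0 k) (Z3toR3 k) = 0.

Lemma IZR_sq_ge1 (z : Z) : z <> 0%Z -> 1 <= IZR z ^ 2.
Proof. intros Hz. replace (IZR z ^ 2) with (IZR (z*z)) by (rewrite mult_IZR; ring). apply IZR_le. nia. Qed.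

Lemma CH_unit e0 f0 m : axis_hyp e0 f0 -> m <> Z3zero ->
  dotR3 (CH_e e0 m) (CH_e e0 m) = 1 /\ dotR3 (CH_f f0 m) (CH_f f0 m) = 1.
Proof.
  intros Hax Hm. unfold CH_e, CH_f. destruct (on_zaxis m) eqn:Ez.
  - destruct (Hax m Hm Ez) as [H1 [H2 _]]; auto.
  - assert (Hh : 0 < kx m ^ 2 + ky m ^ 2).
    { destruct m as [[a b] c]; simpl in Ez |- *.
      apply Bool.andb_false_iff in Ez. rewrite !Z.eqb_neq in Ez.
      pose proof (pow2_ge_0 (IZR a)); pose proof (pow2_ge_0 (IZR b)).
      destruct Ez as [Hz|Hz]; pose proof (IZR_sq_ge1 _ Hz); lra. }
    pose proof (knorm_pos m Hm) as Hn.
    assert (Hkh : 0 < khnorm m) by (apply sqrt_lt_R0; auto).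
    assert (E1 : khnorm m ^ 2 = kx m ^ 2 + ky m ^ 2) by (apply pow2_sqrt; lra).
    assert (E2 : knorm m ^ 2 = kx m ^ 2 + ky m ^ 2 + kz m ^ 2).
    { apply pow2_sqrt. pose proof (pow2_ge_0 (kz m)). lra. }
    set (X := kx m) in *. set (Y := ky m) in *. set (Z := kz m) in *.
    set (h := khnorm m) in *. set (n := knorm m) in *.
    simpl. split.
    + transitivity ((X^2 + Y^2) / h^2). field; lra.
      rewrite <- E1. field. lra.
    + transitivity (((X^2+Y^2) * Z^2 + h^2 * h^2) / (n^2 * h^2)). field; lra.
      rewrite <- E1. replace (h ^ 2 * Z ^ 2 + h ^ 2 * h ^ 2) with (h^2 * (h^2 + Z^2)) by ring.
      rewrite E1, <- E2. field. lra.
Qed.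

Lemma dotZC_vel U beta e0 f0 V W m j :
  dotZC j (vel U beta e0 f0 V W m) =
  (RtoC (Rpower (knorm m) beta * U) *
   (RtoC (dotR3 (Z3toR3 j) (CH_e e0 m)) * V m + RtoC (dotR3 (Z3toR3 j) (CH_f f0 m)) * W m))%C.
Proof.
  unfold vel. destruct (CH_e e0 m) as [[e1 e2] e3]. destruct (CH_f f0 m) as [[f1 f2] f3].
  unfold dotZC. simpl dotR3. rewrite !RtoC_plus, !RtoC_mult. ring.
Qed.

Lemma vel_bound U beta e0 f0 V W Xi m j : 0 <= U -> axis_hyp e0 f0 -> m <> Z3zero ->
  Cmod (V m) <= Xi -> Cmod (W m) <= Xi ->
  Cmod (dotZC j (vel U beta e0 f0 V W m)) <= 2 * U * Xi * Rpower (knorm m) beta * knorm j.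
Proof.
  intros HU Hax Hm HV HW. rewrite dotZC_vel, Cmod_mult, Cmod_R.
  destruct (CH_unit e0 f0 m Hax Hm) as [Ue Uf].
  pose proof (dot_unit_le j _ Ue) as De. pose proof (dot_unit_le j _ Uf) as Df.
  assert (Hp : 0 < Rpower (knorm m) beta) by apply exp_pos.
  rewrite Rabs_right by nra.
  eapply Rle_trans. apply Rmult_le_compat_l. nra.
  eapply Rle_trans; [apply Cmod_triangle|]. rewrite !Cmod_mult, !Cmod_R.
  apply Rplus_le_compat; apply Rmult_le_compat; try apply Rabs_pos; try apply Cmod_ge_0; eauto.
  pose proof (knorm_pos m Hm). unfold knorm at 1 in De.
  assert (0 <= knorm j) by (unfold knorm; apply sqrt_pos).
  assert (0 <= Xi) by (eapply Rle_trans; [apply Cmod_ge_0|apply HV]).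
  nra.
Qed.

Definition Kf kappa beta (k : Z3) := Kbeta kappa beta (knorm k).
Definition wf kappa beta (k : Z3) := / (knorm k ^ 2) * Kf kappa beta k.

Lemma Kbeta_pos kappa beta s : 0 < Kbeta kappa beta s.
Proof. unfold Kbeta. apply Rmin_pos. lra. apply exp_pos. Qed.

Lemma Cmod_Ci : Cmod Defs.Ci = 1.
Proof. unfold Cmod, Defs.Ci; simpl. replace (0 * (0 * 1) + 1 * (1 * 1)) with 1 by ring. apply sqrt_1. Qed.

Lemma adv_bound U beta e0 f0 V W Xi kappa (theta : Z3 -> C) B vp k :
  0 <= U -> axis_hyp e0 f0 ->
  (forall m, m <> Z3zero -> Cmod (V m) <= Xi /\ Cmod (W m) <= Xi) ->
  0 <= B -> (forall j, j <> Z3zero -> Cmod (theta j) <= B * wf kappa beta j) ->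
  (forall k N, k <> Z3zero -> 2 * U * Xi * psumR (varpi_term kappa beta k) N <= 2 * U * Xi * vp * Kf kappa beta k) ->
  k <> Z3zero ->
  Zseries_conv (adv_term (vel U beta e0 f0 V W) theta k) /\
  Cmod (adv (vel U beta e0 f0 V W) theta k) <= B * (2 * U * Xi * vp) * Kf kappa beta k.
Proof.
  intros HU Hax HVW HB Hth Hvp Hk.
  apply (Zconv_dom _ (fun j => B * (2 * U * Xi) * varpi_term kappa beta k j)).
  - intro j. unfold adv_term, varpi_term.
    destruct (Z3eqb j Z3zero || Z3eqb j k)%bool eqn:E.
    + rewrite Cmod_0; lra.
    + apply Bool.orb_false_iff in E as [E1 E2].
      assert (Hj : j <> Z3zero) by (intro; subst; rewrite (proj2 (Z3eqb_spec _ _) eq_refl) in E1; discriminate).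
      pose proof (Z3sub_nz k j E2) as Hm.
      destruct (HVW _ Hm) as [HV HW].
      pose proof (vel_bound U beta e0 f0 V W Xi (Z3sub k j) j HU Hax Hm HV HW) as Hv.
      rewrite !Cmod_mult, Cmod_Ci, Rmult_1_l.
      pose proof (Hth j Hj) as Ht. unfold wf, Kf in Ht.
      pose proof (knorm_pos j Hj) as Hpj.
      pose proof (Kbeta_pos kappa beta (knorm j)) as HK.
      eapply Rle_trans. apply Rmult_le_compat; try apply Cmod_ge_0; eauto.
      right. field. lra.
  - intro N. rewrite psumR_sumL, sumL_scal, <- psumR_sumL.
    specialize (Hvp k N Hk). unfold Kf in *.
    replace (B * (2 * U * Xi * vp) * Kbeta kappa beta (knorm k)) with (B * (2 * U * Xi * vp * Kbeta kappa beta (knorm k))) by ring.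
    replace (B * (2 * U * Xi) * psumR (varpi_term kappa beta k) N) with (B * (2 * U * Xi * psumR (varpi_term kappa beta k) N)) by ring.
    apply Rmult_le_compat_l; auto.
Qed.

Lemma le_fold_max {A} (f : A -> R) l x : In x l -> f x <= fold_right Rmax 0 (map f l).
Proof. induction l; simpl; [tauto|]. intros [->|H]. apply Rmax_l.
  eapply Rle_trans; [apply IHl; auto|apply Rmax_r]. Qed.
Lemma fold_max_ge0 {A} (f : A -> R) l : 0 <= fold_right Rmax 0 (map f l).
Proof. induction l; simpl; [lra|]. eapply Rle_trans; [apply IHl|apply Rmax_r]. Qed.

Lemma in_cube (a b c : Z) N : (Z.abs a <= Z.of_nat N)%Z -> (Z.abs b <= Z.of_nat N)%Z ->
  (Z.abs c <= Z.of_nat N)%Z -> In (a, b, c) (cube N).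
Proof.
  intros Ha Hb Hc. unfold cube. apply in_flat_map. exists a. split. apply in_Zrange; auto.
  apply in_flat_map. exists b. split. apply in_Zrange; auto.
  apply in_map_iff. exists c. split; auto. apply in_Zrange; auto.
Qed.

Lemma comp_le_knorm (a b c : Z) :
  Rabs (IZR a) <= knorm (a, b, c) /\ Rabs (IZR b) <= knorm (a, b, c) /\ Rabs (IZR c) <= knorm (a, b, c).
Proof.
  unfold knorm, kx, ky, kz.
  pose proof (pow2_ge_0 (IZR a)); pose proof (pow2_ge_0 (IZR b)); pose proof (pow2_ge_0 (IZR c)).
  repeat split; rewrite <- sqrt_Rsqr_abs; apply sqrt_le_1_alt; unfold Rsqr; nra.
Qed.

Lemma small_in_cube (kappa : R) (j : Z3) : 0 < kappa -> knorm j < kappa ->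
  In j (cube (Z.to_nat (up kappa))).
Proof.
  intros Hk Hj. destruct j as [[a b] c]. destruct (comp_le_knorm a b c) as [Ha [Hb Hc]].
  destruct (archimed kappa) as [H1 _].
  assert (Hup : (0 < up kappa)%Z) by (apply lt_IZR; lra).
  assert (G : forall z, Rabs (IZR z) < kappa -> (Z.abs z <= Z.of_nat (Z.to_nat (up kappa)))%Z).
  { intros z Hz. rewrite <- abs_IZR in Hz. assert (Z.abs z < up kappa)%Z by (apply lt_IZR; lra). lia. }
  apply in_cube; apply G; lra.
Qed.

Lemma large_bound kappa alpha beta s : 16 <= kappa -> beta < -2 -> alpha <= beta - 2 -> kappa <= s ->
  Rpower s alpha <= / (s ^ 2) * Kbeta kappa beta s.
Proof.
  intros Hk Hb Ha Hs.
  assert (Hs1 : 1 <= s) by lra.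
  eapply Rle_trans. apply Rle_Rpower; eauto.
  unfold Rminus. rewrite Rpower_plus.
  replace (- (2)) with (- INR 2) by (simpl; ring). rewrite Rpower_Ropp, Rpower_pow by lra.
  rewrite Rmult_comm. apply Rmult_le_compat_l. left; apply Rinv_0_lt_compat; nra.
  unfold Kbeta. apply Rmin_glb.
  - rewrite <- (Rpower_O s) by lra. apply Rle_Rpower; lra.
  - replace s with (s / (2 * kappa) * (2 * kappa)) at 1 by (field; lra).
    rewrite <- Rpower_mult_distr by (try apply Rdiv_lt_0_compat; lra).
    assert (0 < Rpower (s / (2 * kappa)) beta) by apply exp_pos.
    assert (Rpower (2 * kappa) beta <= 1).
    { rewrite <- (Rpower_O (2 * kappa)) by lra. apply Rle_Rpower; lra. }
    nra.
Qed.

Lemma gamma_bound (gamma : Z3 -> C) cg kappa alpha beta :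
  0 <= cg -> 16 <= kappa -> beta < -2 -> alpha <= 2 * Rmin beta (-3) - 1 ->
  (forall k, k <> Z3zero -> kappa <= knorm k -> Cmod (gamma k) <= cg * Rpower (knorm k) alpha) ->
  exists C0, 0 <= C0 /\ forall j, j <> Z3zero -> Cmod (gamma j) <= C0 * wf kappa beta j.
Proof.
  intros Hcg Hk Hb Ha Hg.
  set (M := fold_right Rmax 0 (map (fun j => Cmod (gamma j) / wf kappa beta j) (cube (Z.to_nat (up kappa))))).
  assert (HM : 0 <= M) by apply fold_max_ge0.
  exists (cg + M). split. lra. intros j Hj.
  assert (Hw : 0 < wf kappa beta j).
  { unfold wf, Kf. apply Rmult_lt_0_compat. apply Rinv_0_lt_compat. apply pow_lt, knorm_pos; auto.
    apply Kbeta_pos. }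
  destruct (Rlt_le_dec (knorm j) kappa) as [Hs|Hs].
  - assert (H : Cmod (gamma j) / wf kappa beta j <= M).
    { apply (le_fold_max (fun j => Cmod (gamma j) / wf kappa beta j)). apply small_in_cube; auto; lra. }
    unfold Rdiv in H. apply Rmult_le_compat_r with (r := wf kappa beta j) in H; [|lra].
    rewrite Rmult_assoc, Rinv_l, Rmult_1_r in H by lra. nra.
  - eapply Rle_trans. apply Hg; auto.
    assert (Rmin beta (-3) <= beta) by apply Rmin_l.
    pose proof (large_bound kappa alpha beta (knorm j) Hk Hb ltac:(lra) Hs) as HL.
    unfold wf, Kf in *. set (X := / knorm j ^ 2 * Kbeta kappa beta (knorm j)) in *.
    apply Rle_trans with (cg * X). apply Rmult_le_compat_l; auto. nra.
Qed.

Lemma varpi_term_nn kappa beta k j : 0 <= varpi_term kappa beta k j.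
Proof.
  unfold varpi_term. destruct (Z3eqb j Z3zero || Z3eqb j k)%bool eqn:E. lra.
  apply Bool.orb_false_iff in E as [E1 _].
  assert (Hj : j <> Z3zero) by (intro; subst; rewrite (proj2 (Z3eqb_spec _ _) eq_refl) in E1; discriminate).
  pose proof (knorm_pos j Hj). pose proof (Kbeta_pos kappa beta (knorm j)).
  pose proof (exp_pos (beta * ln (knorm (Z3sub k j)))).
  unfold Rpower. apply Rmult_le_pos; [apply Rmult_le_pos|]; try lra. left; apply Rinv_0_lt_compat; lra.
Qed.

Lemma varpi_facts kappa beta U Xi : 0 <= U -> 0 <= Xi ->
  Rbar_lt (Rbar_mult (Finite (4 * U * Xi)) (varpi kappa beta)) (Finite 1) ->
  0 <= real (varpi kappa beta) /\ 4 * U * Xi * real (varpi kappa beta) < 1 /\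
  forall k N, k <> Z3zero -> 2 * U * Xi * psumR (varpi_term kappa beta k) N <=
     2 * U * Xi * real (varpi kappa beta) * Kf kappa beta k.
Proof.
  intros HU HX Hlt.
  assert (Hub : forall k N, k <> Z3zero ->
    Rbar_le (Finite (/ Kbeta kappa beta (knorm k) * psumR (varpi_term kappa beta k) N)) (varpi kappa beta)).
  { intros k N Hk. unfold varpi. destruct (Lub_Rbar_correct (fun x => exists (k : Z3) (N : nat), k <> Z3zero /\
     x = / Kbeta kappa beta (knorm k) * psumR (varpi_term kappa beta k) N)) as [H _].
    apply H. exists k, N. auto. }
  assert (Hnn : forall k N, 0 <= / Kbeta kappa beta (knorm k) * psumR (varpi_term kappa beta k) N).
  { intros. apply Rmult_le_pos. left; apply Rinv_0_lt_compat, Kbeta_pos.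
    rewrite psumR_sumL. apply sumL_nonneg. apply varpi_term_nn. }
  assert (Hk1 : ((1%Z, 0%Z, 0%Z) : Z3) <> Z3zero) by (intro H; inversion H).
  pose proof (Hub _ 0%nat Hk1) as H0. pose proof (Hnn ((1%Z, 0%Z, 0%Z) : Z3) 0%nat).
  destruct (varpi kappa beta) as [v| |] eqn:Ev; simpl in H0 |- *.
  - assert (0 <= v) by lra. simpl in Hlt. repeat split; auto.
    intros k N Hk. specialize (Hub k N Hk). simpl in Hub.
    pose proof (Kbeta_pos kappa beta (knorm k)). unfold Kf.
    assert (psumR (varpi_term kappa beta k) N <= v * Kbeta kappa beta (knorm k)).
    { apply Rmult_le_compat_r with (r := Kbeta kappa beta (knorm k)) in Hub; [|lra].
      rewrite Rmult_comm, <- Rmult_assoc, Rinv_r, Rmult_1_l in Hub by lra. lra. }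
    replace (2 * U * Xi * v * Kbeta kappa beta (knorm k)) with (2 * U * Xi * (v * Kbeta kappa beta (knorm k))) by ring.
    apply Rmult_le_compat_l; auto. nra.
  - assert (E0 : 4 * U * Xi = 0).
    { destruct (Req_dec (4 * U * Xi) 0) as [E|E]; auto. exfalso.
      simpl in Hlt. destruct (Rle_dec 0 (4 * U * Xi)) as [Hle|Hle]; [|nra].
      destruct (Rle_lt_or_eq_dec 0 (4 * U * Xi) Hle) as [Hl|Hl]; simpl in Hlt; [auto|lra]. }
    repeat split; try lra. intros k N _. assert (E2 : 2 * U * Xi = 0) by lra. rewrite E2. lra.
  - contradiction.
Qed.

Lemma Cmod_minus_le (x y : C) : Cmod (x - y) <= Cmod x + Cmod y.
Proof. unfold Cminus. eapply Rle_trans; [apply Cmod_triangle|]. rewrite Cmod_opp. lra. Qed.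

Lemma adv_minus u (ta tb : Z3 -> C) k :
  Zseries_conv (adv_term u ta k) -> Zseries_conv (adv_term u tb k) ->
  (adv u ta k - adv u tb k)%C = adv u (fun j => ta j - tb j)%C k.
Proof.
  intros Ha Hb. unfold adv. rewrite <- Zsum_minus by auto. f_equal.
  apply functional_extensionality. intro j. unfold adv_term.
  destruct (Z3eqb j Z3zero || Z3eqb j k)%bool. apply Ceq; simpl; ring. ring.
Qed.

Lemma step_bound (A : C) (j : Z3) (X : R) : j <> Z3zero -> Cmod A <= X ->
  Cmod (RtoC (- / (knorm j ^ 2)) * A) <= / (knorm j ^ 2) * X.
Proof.
  intros Hj H. rewrite Cmod_mult, Cmod_R, Rabs_Ropp, Rabs_right.
  apply Rmult_le_compat_l; auto. left; apply Rinv_0_lt_compat, pow_lt, knorm_pos; auto.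
  left; apply Rinv_0_lt_compat, pow_lt, knorm_pos; auto.
Qed.

Lemma Re_minus (a b : C) : Re (a - b)%C = Re a - Re b. Proof. reflexivity. Qed.
Lemma Im_minus (a b : C) : Im (a - b)%C = Im a - Im b. Proof. reflexivity. Qed.
Lemma pair_minus (a b : C) : (Re a - Re b, Im a - Im b) = (a - b)%C.
Proof. destruct a, b; reflexivity. Qed.

Lemma pow_le_1 (x : R) (n : nat) : 0 <= x <= 1 -> x ^ n <= 1.
Proof. intros H; induction n; simpl; [lra|]. pose proof (pow_le x n (proj1 H)). nra. Qed.

Lemma cauchy_seq (z : nat -> C) (A rho : R) : 0 <= A -> 0 <= rho < 1 ->
  (forall n m, (n <= m)%nat -> Cmod (z m - z n)%C <= A * rho ^ n) ->
  ex_finite_lim_seq (fun n => Re (z n)) /\ ex_finite_lim_seq (fun n => Im (z n)).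
Proof.
  intros HA Hr H.
  assert (G : forall (pr : C -> R), (forall a b, Rabs (pr (a - b)%C) <= Cmod (a - b)%C) ->
     (forall a b, pr (a - b)%C = pr a - pr b) -> ex_finite_lim_seq (fun n => pr (z n))).
  { intros pr Hpr Hlin. apply ex_lim_seq_cauchy_corr. intros eps.
    assert (Hy : 0 < eps / (A + 1)) by (apply Rdiv_lt_0_compat; [apply cond_pos|lra]).
    destruct (pow_lt_1_zero rho ltac:(rewrite Rabs_right; lra) _ Hy) as [N HN].
    exists N. intros n m Hn Hm.
    assert (K : forall n m, (N <= n)%nat -> (n <= m)%nat -> Rabs (pr (z n) - pr (z m)) < eps).
    { intros a b Ha Hab. rewrite Rabs_minus_sym, <- Hlin. eapply Rle_lt_trans. apply Hpr.
      eapply Rle_lt_trans. apply H; auto. specialize (HN a Ha). rewrite Rabs_right in HN by (apply Rle_ge, pow_le; lra).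
      pose proof (pow_le rho a (proj1 Hr)). pose proof (cond_pos eps).
      apply Rle_lt_trans with ((A + 1) * rho ^ a). nra.
      replace (pos eps) with ((A + 1) * (eps / (A + 1))) by (field; lra).
      apply Rmult_lt_compat_l; lra. }
    destruct (Nat.le_ge_cases n m). apply K; auto. rewrite Rabs_minus_sym. apply K; auto. }
  split; apply G.
  - intros; apply re_le_Cmod.
  - intros; apply Re_minus.
  - intros; apply im_le_Cmod.
  - intros; apply Im_minus.
Qed.

Theorem mainTheorem7 (gamma : Z3 -> C) (cg kappa alpha beta : R) :
  (forall k, gamma (Z3opp k) = Cconj (gamma k)) ->
  0 <= cg -> 16 <= kappa -> beta < -2 -> alpha <= 2 * Rmin beta (-3) - 1 ->
  (forall k, k <> Z3zero -> kappa <= knorm k ->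
     Cmod (gamma k) <= cg * Rpower (knorm k) alpha) ->
  exists c1 : R,
  forall (U Xi : R) (V W : Z3 -> C) (e0 f0 : Z3 -> R3),
    0 <= U ->
    (forall k, V (Z3opp k) = Cconj (V k)) ->
    (forall k, W (Z3opp k) = Cconj (W k)) ->
    (forall k, k <> Z3zero -> Cmod (V k) <= Xi /\ Cmod (W k) <= Xi) ->
    (forall k, k <> Z3zero -> on_zaxis k = true ->
       dotR3 (e0 k) (e0 k) = 1 /\ dotR3 (f0 k) (f0 k) = 1 /\ dotR3 (e0 k) (f0 k) = 0 /\
       dotR3 (e0 k) (Z3toR3 k) = 0 /\ dotR3 (f0 k) (Z3toR3 k) = 0) ->
    Rbar_lt (Rbar_mult (Finite (4 * U * Xi)) (varpi kappa beta)) (Finite 1) ->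
    let u := vel U beta e0 f0 V W in
    let theta := iterate u gamma in
    let eps := 4 * U * Xi * real (varpi kappa beta) in
    (forall n k, k <> Z3zero -> Zseries_conv (adv_term u (theta n) k)) /\
    exists theta_inf : Z3 -> C,
      (forall k, k <> Z3zero ->
         is_lim_seq (fun n => Re (theta n k)) (Re (theta_inf k)) /\
         is_lim_seq (fun n => Im (theta n k)) (Im (theta_inf k))) /\
      (forall k, k <> Z3zero ->
         Cmod (theta 1%nat k - theta_inf k)%C
           <= c1 * U * Xi * eps * / (knorm k ^ 2) * Kbeta kappa beta (knorm k)).
Proof.
  intros _ Hcg Hk Hb Ha Hg.
  destruct (gamma_bound gamma cg kappa alpha beta Hcg Hk Hb Ha Hg) as [C0 [HC0 Hgam]].
  exists (2 * C0 * real (varpi kappa beta)).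
  intros U Xi V W e0 f0 HU _ _ HVW Hax Hlt u theta eps.
  assert (Hk1 : ((1%Z, 0%Z, 0%Z) : Z3) <> Z3zero) by (intro H; inversion H).
  assert (HX : 0 <= Xi) by (destruct (HVW _ Hk1) as [H _]; eapply Rle_trans; [apply Cmod_ge_0|apply H]).
  destruct (varpi_facts kappa beta U Xi HU HX Hlt) as [Hvp0 [Hrho Hvp]].
  set (vp := real (varpi kappa beta)) in *.
  set (rho := 2 * U * Xi * vp).
  assert (Hr0 : 0 <= rho) by (unfold rho; repeat apply Rmult_le_pos; lra).
  assert (Hr1 : rho < 1 / 2) by (unfold rho; lra).
  assert (Hax' : axis_hyp e0 f0) by exact Hax.
  assert (Hwpos : forall j, j <> Z3zero -> 0 < wf kappa beta j).
  { intros j Hj. unfold wf, Kf. apply Rmult_lt_0_compat. apply Rinv_0_lt_compat, pow_lt, knorm_pos; auto.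
    apply Kbeta_pos. }
  assert (HQ : forall n, exists B, 0 <= B /\ forall j, j <> Z3zero -> Cmod (theta n j) <= B * wf kappa beta j).
  { induction n as [|n [B [HB IH]]].
    - exists C0. split; auto. intros j Hj. change (theta 0%nat j) with (- gamma j)%C. rewrite Cmod_opp. auto.
    - exists (B * rho + C0). split. nra. intros j Hj.
      change (theta (S n) j) with (RtoC (- / (knorm j ^ 2)) * adv u (theta n) j - gamma j)%C.
      destruct (adv_bound U beta e0 f0 V W Xi kappa (theta n) B vp j HU Hax' HVW HB IH Hvp Hj) as [_ Hadv].
      eapply Rle_trans. apply Cmod_minus_le.
      pose proof (step_bound _ j _ Hj Hadv). pose proof (Hgam j Hj).
      unfold wf, Kf in *. fold rho in H. fold u in H.
      assert (E : (B * rho + C0) * (/ knorm j ^ 2 * Kbeta kappa beta (knorm j)) = / knorm j ^ 2 * (B * rho * Kbeta kappa beta (knorm j)) + C0 * (/ knorm j ^ 2 * Kbeta kappa beta (knorm j))) by ring. lra. }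
  assert (Hconv : forall n k, k <> Z3zero -> Zseries_conv (adv_term u (theta n) k)).
  { intros n k Hk0. destruct (HQ n) as [B [HB IH]].
    exact (proj1 (adv_bound U beta e0 f0 V W Xi kappa (theta n) B vp k HU Hax' HVW HB IH Hvp Hk0)). }
  split; [exact Hconv|].
  assert (HP : forall n j, j <> Z3zero -> Cmod (theta (S n) j - theta n j)%C <= C0 * rho ^ (S n) * wf kappa beta j).
  { induction n as [|n IH]; intros j Hj.
    - replace (theta 1%nat j - theta 0%nat j)%C with (RtoC (- / (knorm j ^ 2)) * adv u (theta 0%nat) j)%C
        by (change (theta 1%nat j) with (RtoC (- / (knorm j ^ 2)) * adv u (theta 0%nat) j - gamma j)%C;
            change (theta 0%nat j) with (- gamma j)%C; ring).
      assert (IH0 : forall j, j <> Z3zero -> Cmod (theta 0%nat j) <= C0 * wf kappa beta j).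
      { intros j' Hj'. change (theta 0%nat j') with (- gamma j')%C. rewrite Cmod_opp. auto. }
      destruct (adv_bound U beta e0 f0 V W Xi kappa (theta 0%nat) C0 vp j HU Hax' HVW HC0 IH0 Hvp Hj) as [_ Hadv].
      eapply Rle_trans. apply (step_bound _ j _ Hj Hadv). unfold wf, Kf. fold rho. right; ring.
    - replace (theta (S (S n)) j - theta (S n) j)%C with
        (RtoC (- / (knorm j ^ 2)) * (adv u (theta (S n)) j - adv u (theta n) j))%C
        by (change (theta (S (S n)) j) with (RtoC (- / (knorm j ^ 2)) * adv u (theta (S n)) j - gamma j)%C;
            change (theta (S n) j) with (RtoC (- / (knorm j ^ 2)) * adv u (theta n) j - gamma j)%C; ring).
      rewrite (adv_minus u (theta (S n)) (theta n) j (Hconv _ _ Hj) (Hconv _ _ Hj)).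
      assert (HB : 0 <= C0 * rho ^ S n) by (apply Rmult_le_pos; auto; apply pow_le; auto).
      destruct (adv_bound U beta e0 f0 V W Xi kappa (fun j => theta (S n) j - theta n j)%C (C0 * rho ^ S n) vp j HU Hax' HVW HB IH Hvp Hj) as [_ Hadv].
      eapply Rle_trans. apply (step_bound _ j _ Hj Hadv). unfold wf, Kf. fold rho. right. simpl. ring. }
  assert (HT : forall n p j, j <> Z3zero ->
    Cmod (theta (n + p)%nat j - theta n j)%C <= C0 * rho ^ (S n) * ((1 - rho ^ p) / (1 - rho)) * wf kappa beta j).
  { intros n p j Hj. induction p as [|p IH].
    - rewrite Nat.add_0_r. replace (theta n j - theta n j)%C with (RtoC 0) by ring. rewrite Cmod_0.
      simpl. replace (1 - 1) with 0 by ring. unfold Rdiv. rewrite Rmult_0_l, Rmult_0_r, Rmult_0_l. lra.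
    - replace (theta (n + S p)%nat j - theta n j)%C with
        ((theta (S (n + p)) j - theta (n + p)%nat j) + (theta (n + p)%nat j - theta n j))%C
        by (rewrite Nat.add_succ_r; ring).
      eapply Rle_trans. apply Cmod_triangle.
      pose proof (HP (n + p)%nat j Hj) as H1.
      replace (rho ^ S (n + p)) with (rho ^ S n * rho ^ p) in H1 by (rewrite <- pow_add; f_equal; lia).
      assert (E : C0 * rho ^ S n * ((1 - rho ^ S p) / (1 - rho)) * wf kappa beta j =
        C0 * (rho ^ S n * rho ^ p) * wf kappa beta j + C0 * rho ^ S n * ((1 - rho ^ p) / (1 - rho)) * wf kappa beta j)
        by (simpl; field; lra).
      lra. }
  assert (Hfrac : forall p, (1 - rho ^ p) / (1 - rho) <= 2).
  { intro p. pose proof (pow_le rho p Hr0). apply Rmult_le_reg_r with (1 - rho). lra.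
    unfold Rdiv. rewrite Rmult_assoc, Rinv_l by lra. lra. }
  assert (HC : forall k, k <> Z3zero -> forall n m, (n <= m)%nat ->
     Cmod (theta m k - theta n k)%C <= (2 * C0 * wf kappa beta k) * rho ^ n).
  { intros k Hk0 n m Hnm. replace m with (n + (m - n))%nat by lia.
    eapply Rle_trans. apply HT; auto. pose proof (Hwpos k Hk0). pose proof (Hfrac (m - n)%nat).
    pose proof (pow_le rho n Hr0). simpl.
    assert (0 <= (1 - rho ^ (m - n)) / (1 - rho)).
    { apply Rdiv_le_0_compat; [|lra]. assert (rho ^ (m - n) <= 1) by (apply pow_le_1; lra). lra. }
    assert (rho * rho ^ n <= rho ^ n) by nra.
    apply Rle_trans with (C0 * rho ^ n * 2 * wf kappa beta k); [|right; ring].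
    apply Rmult_le_compat_r; [lra|]. rewrite Rmult_assoc, (Rmult_assoc C0 (rho ^ n)).
    apply Rmult_le_compat_l; auto. apply Rmult_le_compat; try nra. }
  set (theta_inf := fun k => (real (Lim_seq (fun n => Re (theta n k))), real (Lim_seq (fun n => Im (theta n k))))).
  exists theta_inf.
  assert (Hlim : forall k, k <> Z3zero ->
     is_lim_seq (fun n => Re (theta n k)) (Re (theta_inf k)) /\
     is_lim_seq (fun n => Im (theta n k)) (Im (theta_inf k))).
  { intros k Hk0. pose proof (Hwpos k Hk0).
    destruct (cauchy_seq (fun n => theta n k) (2 * C0 * wf kappa beta k) rho ltac:(nra) ltac:(lra) (HC k Hk0)) as [E1 E2].
    split; apply Lim_seq_correct'; auto. }
  split; [exact Hlim|].
  intros k Hk0. destruct (Hlim k Hk0) as [L1 L2].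
  rewrite <- pair_minus.
  apply (lim_Cmod (fun n => Re (theta 1%nat k) - Re (theta (S n) k)) (fun n => Im (theta 1%nat k) - Im (theta (S n) k))).
  - apply is_lim_seq_minus'. apply is_lim_seq_const. apply (is_lim_seq_incr_1 (fun n => Re (theta n k))). auto.
  - apply is_lim_seq_minus'. apply is_lim_seq_const. apply (is_lim_seq_incr_1 (fun n => Im (theta n k))). auto.
  - intro n. rewrite pair_minus.
    replace (theta 1%nat k - theta (S n) k)%C with (- (theta (1 + n)%nat k - theta 1%nat k))%C by (simpl; ring).
    rewrite Cmod_opp. eapply Rle_trans. apply HT; auto.
    pose proof (Hwpos k Hk0). pose proof (Hfrac n).
    assert (0 <= (1 - rho ^ n) / (1 - rho)).
    { apply Rdiv_le_0_compat; [|lra]. assert (rho ^ n <= 1) by (apply pow_le_1; lra). lra. }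
    unfold eps, wf, Kf in *. fold vp. 
    replace (2 * C0 * vp * U * Xi * (4 * U * Xi * vp) * / knorm k ^ 2 * Kbeta kappa beta (knorm k))
      with (C0 * rho ^ 2 * 2 * (/ knorm k ^ 2 * Kbeta kappa beta (knorm k))) by (unfold rho; ring).
    set (X := / knorm k ^ 2 * Kbeta kappa beta (knorm k)) in *.
    assert (0 <= C0 * rho ^ 2) by (apply Rmult_le_pos; [lra|apply pow_le; lra]).
    apply Rmult_le_compat_r; [lra|].
    apply Rmult_le_compat_l; auto.
Qed.
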